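(* For any central, essential real hyperplane arrangement $\mathcal{A}$, the graph $G_1$ has diameter exactly $|L_1|$ (the number of hyperplanes). For any choice of base chamber $c_0$ of $\mathcal{A}$, the graph $G_2$ has diameter at least $|L_2|$.
   Context: A central, essential arrangement $\mathcal{A}$ is a finite set of linear hyperplanes in $\mathbb{R}^d$ with common intersection $\{0\}$; $L_i$ is the set of codimension-$i$ subspaces obtained as intersections of hyperplanes of $\mathcal{A}$, so $L_1=\mathcal{A}$. Chambers are connected components of the complement of the union of hyperplanes; $L_1(c,c')$ is the set of hyperplanes separating chambers $c,c'$. $G_1$ is the graph on chambers with $c,c'$ adjacent iff $|L_1(c,c')|=1$. A minimal gallery is a shortest path in $G_1$; one from $c_0$ to $-c_0$ crosses every hyperplane exactly once. For minimal galleries $r,r'$ from $c_0$ to $-c_0$, $L_2(r,r')$ is the set of $X\in L_2$ such that $r,r'$ cross the hyperplanes containing $X$ in different orders. $G_2$ is the graph whose vertices are the minimal galleries from $c_0$ to $-c_0$, with $r,r'$ adjacent iff $|L_2(r,r')|=1$. *)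

(* Defs.v *)
From HB Require Import structures.
From mathcomp Require Import all_boot all_order all_algebra.
From mathcomp Require Import all_classical all_reals all_analysis.
Set Implicit Arguments. Unset Strict Implicit. Unset Printing Implicit Defensive.
Import Order.TTheory GRing.Theory Num.Theory numFieldNormedType.Exports.
Local Open Scope classical_set_scope.
Local Open Scope ring_scope.

Section Arrangements.
Variables (R : realType) (d n : nat).
Notation V := 'rV[R]_d.

(* An arrangement of n hyperplanes in R^d is given by normal vectors a i;
   the i-th hyperplane is H a i = {x | <a i, x> = 0}. *)
Variable a : 'I_n -> V.

Definition dotv (u v : V) : R := \sum_(k < d) u 0 k * v 0 k.

Definition hyp (i : 'I_n) : set V := [set x | dotv (a i) x = 0].

Definition central_essential_arrangement : Prop :=
  [/\ forall i, a i != 0,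
      forall i j, i != j -> hyp i <> hyp j
    & \bigcap_(i in [set: 'I_n]) hyp i = [set 0]].

Definition complement : set V := ~` (\bigcup_(i in [set: 'I_n]) hyp i).

Definition chamber (c : set V) : Prop :=
  exists2 x, complement x & c = connected_component complement x.

Definition separates (i : 'I_n) (c c' : set V) : Prop :=
  forall x y, c x -> c' y -> dotv (a i) x * dotv (a i) y < 0.

Definition L1sep (c c' : set V) : {set 'I_n} :=
  [set i | `[< separates i c c' >]].

Definition G1adj (c c' : set V) : Prop :=
  [/\ chamber c, chamber c' & #|L1sep c c'| = 1%N].

(* a path (gallery) in G_1 from c through the chambers s, ending at c';
   its length is size s *)
Fixpoint gallery (c : set V) (s : seq (set V)) (c' : set V) : Prop :=
  match s with
  | [::] => c = c'
  | c1 :: s' => G1adj c c1 /\ gallery c1 s' c'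
  end.

Definition negc (c : set V) : set V := [set x | c (- x)].

(* minimal galleries from c0 to -c0 (shortest paths in G_1);
   a gallery r is represented by the chambers following c0 *)
Definition min_gallery (c0 : set V) (r : seq (set V)) : Prop :=
  gallery c0 r (negc c0) /\
  forall s, gallery c0 s (negc c0) -> (size r <= size s)%N.

Definition crossings (c0 : set V) (r : seq (set V)) : seq 'I_n :=
  flatten [seq enum (L1sep p.1 p.2) | p <- zip (c0 :: r) r].

Definition rowsS (S : {set 'I_n}) : 'M[R]_(n, d) :=
  \matrix_(i < n) (if i \in S then a i else 0).

(* L_2: codimension-2 subspaces that are intersections of hyperplanes
   of the arrangement (the codimension of the intersection of the
   hyperplanes indexed by S is the rank of the matrix of their normals) *)
Definition L2 : set (set V) :=
  [set X | exists S : {set 'I_n},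
     X = \bigcap_(i in [set j | j \in S]) hyp i /\ \rank (rowsS S) = 2%N].

Definition L2diff (c0 : set V) (r r' : seq (set V)) : set (set V) :=
  [set X | L2 X /\
     [seq i <- crossings c0 r | `[< X `<=` hyp i >]] <>
     [seq i <- crossings c0 r' | `[< X `<=` hyp i >]]].

Definition G2adj (c0 : set V) (r r' : seq (set V)) : Prop :=
  [/\ min_gallery c0 r, min_gallery c0 r' & exists X, L2diff c0 r r' = [set X]].

Fixpoint G2path (c0 : set V) (r : seq (set V)) (p : seq (seq (set V)))
    (r' : seq (set V)) : Prop :=
  match p with
  | [::] => r = r'
  | r1 :: p' => G2adj c0 r r1 /\ G2path c0 r1 p' r'
  end.

End Arrangements.

(* Main.v *)
Require Import Defs.
From HB Require Import structures.
From mathcomp Require Import all_boot all_order all_algebra.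
From mathcomp Require Import all_classical all_reals all_analysis.
From mathcomp Require Import lra.
Import Order.TTheory GRing.Theory Num.Theory numFieldNormedType.Exports.
Local Open Scope classical_set_scope.
Local Open Scope ring_scope.

Section Aux.
Variables (R : realType) (d : nat).
Local Notation V := 'rV[R]_d.
Local Notation dot := (@dotv R d).

Lemma dotvD u x y : dot u (x + y) = dot u x + dot u y.
Proof. rewrite /dotv -big_split /=; apply: eq_bigr => k _; by rewrite mxE mulrDr. Qed.

Lemma dotvZ u k x : dot u (k *: x) = k * dot u x.
Proof. rewrite /dotv mulr_sumr; apply: eq_bigr => j _; rewrite mxE; lra. Qed.

Lemma dotvN u x : dot u (- x) = - dot u x.
Proof. by rewrite -scaleN1r dotvZ mulN1r. Qed.

Lemma dotvB u x y : dot u (x - y) = dot u x - dot u y.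
Proof. by rewrite dotvD dotvN. Qed.

Lemma dotvC u x : dot u x = dot x u.
Proof. by rewrite /dotv; apply: eq_bigr => k _; rewrite mulrC. Qed.

Lemma dotv0 u : dot u 0 = 0.
Proof. by rewrite /dotv big1 // => k _; rewrite mxE mulr0. Qed.

Lemma dotvxx u : u != 0 -> dot u u != 0.
Proof.
move=> u0; apply/negP => /eqP H; move/negP: u0; apply; apply/eqP/matrixP => i j.
rewrite !ord1 mxE.
have /psumr_eq0P P : (forall k : 'I_d, true -> 0 <= u 0 k ^+ 2) by move=> k _; exact: sqr_ge0.
move: H; rewrite /dotv; under eq_bigr do rewrite -expr2.
move=> H; move: (P H j isT) => /eqP; by rewrite sqrf_eq0 => /eqP.
Qed.

Lemma sign_keep (al de : R) : al != 0 -> `|de| < `|al| ->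
  al + de != 0 /\ (0 < al + de) = (0 < al).
Proof.
move=> a0; rewrite ltr_norml => /andP[h1 h2].
case: (ltrgtP al 0) a0 => // ha _.
  rewrite ltr0_norm // in h1 h2; split; [apply/eqP|]; lra.
rewrite gtr0_norm // in h1 h2; split; [apply/eqP|]; lra.
Qed.

Lemma small_pos (s : seq R) : exists2 e : R, 0 < e & forall b, b \in s -> 0 < b -> e <= b.
Proof.
elim: s => [|b s [e e0 He]]; first by exists 1.
case: (ltrP 0 b) => hb.
  exists (Num.min e b); first by rewrite lt_min e0 hb.
  move=> x; rewrite inE => /orP[/eqP->|xs] x0; first by rewrite ge_min lexx orbT.
  by rewrite ge_min He.
exists e => // x; rewrite inE => /orP[/eqP->|xs] x0; [lra|exact: He].
Qed.

Lemma perturb (L : seq V) x u :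
  (forall l, l \in L -> dot l x != 0 \/ dot l u != 0) ->
  exists2 t, 0 < t & forall l, l \in L ->
    dot l (x + t *: u) != 0 /\ (dot l x != 0 -> (0 < dot l (x + t *: u)) = (0 < dot l x)).
Proof.
move=> HL.
have [e e0 He] := small_pos [seq `|dot l x| / (`|dot l u| + 1) | l <- L].
exists e => // l lL; rewrite dotvD dotvZ.
have key : dot l x != 0 -> dot l x + e * dot l u != 0 /\
    (0 < dot l x + e * dot l u) = (0 < dot l x).
  move=> nz; apply: sign_keep => //.
  have b0 : 0 < `|dot l x| / (`|dot l u| + 1).
    by apply: divr_gt0; [rewrite normr_gt0|apply: ltr_wpDl].
  have := He _ (map_f _ lL) b0; rewrite ler_pdivlMr ?ltr_wpDl // => h.
  rewrite normrM (gtr0_norm e0).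
  have : e * `|dot l u| < e * (`|dot l u| + 1) by rewrite ltr_pM2l //; lra.
  lra.
case: (HL l lL) => [nz|nz]; first by have [] := key nz.
case: (eqVneq (dot l x) 0) => [->|nz']; last by have [] := key nz'.
rewrite add0r; split => //; apply: mulf_neq0 => //; by rewrite gt_eqF.
Qed.

Lemma exists_w (L : seq V) : (forall l, l \in L -> l != 0) ->
  exists w, forall l, l \in L -> dot l w != 0.
Proof.
elim: L => [|l L IH] H; first by exists 0.
have [w Hw] : exists w, forall l', l' \in L -> dot l' w != 0.
  by apply: IH => l' l'L; apply: H; rewrite inE l'L orbT.
case: (eqVneq (dot l w) 0) => hl; last first.
  by exists w => l'; rewrite inE => /orP[/eqP->|/Hw].
have HL : forall l', l' \in l :: L -> dot l' w != 0 \/ dot l' l != 0.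
  move=> l'; rewrite inE => /orP[/eqP->|l'L]; last by left; exact: Hw.
  by right; apply: dotvxx; apply: H; rewrite inE eqxx.
have [t t0 Ht] := perturb _ _ _ HL.
by exists (w + t *: l) => l' l'L; have [] := Ht l' l'L.
Qed.

End Aux.

Section Reals.
Variable R : realType.

Lemma exists_min (I : eqType) (f : I -> R) (s : seq I) (x0 : I) :
  x0 \in s -> exists2 i, i \in s & forall j, j \in s -> f i <= f j.
Proof.
elim: s x0 => [|b s IH] x0 // _.
case: s IH => [|c s] IH.
  by exists b; [exact: mem_head | move=> j; rewrite inE => /eqP ->].
have [i iS hi] := IH c (mem_head _ _).
case: (lerP (f b) (f i)) => h.
  exists b; first exact: mem_head.
  move=> j; rewrite inE => /orP[/eqP->//|jS]; exact: le_trans h (hi j jS).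
exists i; first by rewrite inE iS orbT.
move=> j; rewrite inE => /orP[/eqP->|jS]; [exact: ltW | exact: hi].
Qed.

Lemma tt_range (al be : R) : al * be < 0 -> 0 < al / (al - be) < 1.
Proof.
case: (ltrgtP al 0) => ha.
- rewrite nmulr_rlt0 // => hb; have hD : al - be < 0 by lra.
  rewrite ltr_ndivlMr // ltr_ndivrMr //; apply/andP; split; lra.
- rewrite pmulr_rlt0 // => hb; have hD : 0 < al - be by lra.
  rewrite ltr_pdivlMr // ltr_pdivrMr //; apply/andP; split; lra.
- by rewrite ha mul0r ltxx.
Qed.

Lemma pos_sign (v : R) : 0 < v -> v != 0 /\ (0 < v) = true.
Proof. by move=> h; rewrite h gt_eqF. Qed.

Lemma neg_sign (v : R) : v < 0 -> v != 0 /\ (0 < v) = false.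
Proof. by move=> h; rewrite lt_eqF // lt_gtF. Qed.

Lemma seg_cross (al be t : R) : al * be < 0 ->
  (0 <= t -> t < al / (al - be) ->
     al + t * (be - al) != 0 /\ (0 < al + t * (be - al)) = (0 < al)) /\
  (al / (al - be) < t -> t <= 1 ->
     al + t * (be - al) != 0 /\ (0 < al + t * (be - al)) = (0 < be)).
Proof.
have e : t * (be - al) = - (t * (al - be)) by rewrite -mulrN opprB.
rewrite e => hab; case: (ltrgtP al 0) => ha.
- have hb : 0 < be by move: hab; rewrite nmulr_rlt0.
  have hD : al - be < 0 by lra.
  rewrite ltr_ndivlMr // ltr_ndivrMr // hb; split => h1 h2.
    by apply: neg_sign; lra.
  by apply: pos_sign; lra.
- have hb : be < 0 by move: hab; rewrite pmulr_rlt0.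
  have hD : 0 < al - be by lra.
  rewrite ltr_pdivlMr // ltr_pdivrMr // (lt_gtF hb); split => h1 h2.
    by apply: pos_sign; lra.
  by apply: neg_sign; lra.
- by move: hab; rewrite ha mul0r ltxx.
Qed.

End Reals.

Section Topo.
Variables (R : realType) (d : nat).
Local Notation V := 'rV[R]_d.
Local Notation dot := (@dotv R d).

Lemma dot_cont u : continuous (dot u).
Proof.
rewrite /dotv; elim: (index_enum 'I_d) => [|k r IH].
  have -> : (fun y : V => \sum_(i <- [::]) u 0 i * y 0 i) = (fun=> 0).
    by apply: funext => y; rewrite big_nil.
  exact: cst_continuous.
have -> : (fun y : V => \sum_(i <- k :: r) u 0 i * y 0 i) =
   (fun y : V => u 0 k * y 0 k + \sum_(i <- r) u 0 i * y 0 i).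
  by apply: funext => y; rewrite big_cons.
move=> x; apply: (@continuousD R R^o _ _ _ x); last exact: IH.
have h1 : {for x, continuous (fun _ : V => u 0 k)} by exact: cst_continuous.
have h2 : {for x, continuous (fun y : V => y 0 k)} by exact: coord_continuous.
exact: (continuousM h1 h2).
Qed.

Lemma scal_dot_cont al u : continuous (fun y : V => al * dot u y).
Proof.
move=> x; have h1 : {for x, continuous (fun _ : V => al)} by exact: cst_continuous.
exact: (continuousM h1 (dot_cont u x)).
Qed.

Lemma seg_cont (x y : V) : continuous (fun t : R => x + t *: (y - x)).
Proof.
move=> t; have h1 : {for t, continuous (fun _ : R => x)} by exact: cst_continuous.
have h2 : {for t, continuous (fun s : R => s *: (y - x))}.
  apply: continuousZr_tmp; exact: id.
exact: (continuousD h1 h2).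
Qed.

End Topo.

Lemma pos_mul_same (R : realType) (p q : R) : 0 < p * q -> (0 < p) = (0 < q).
Proof.
case: (ltrgtP p 0) => hp.
- by rewrite nmulr_rgt0 // => hq; rewrite (lt_gtF hq).
- by move=> h; apply/esym; rewrite -(pmulr_rgt0 _ hp).
- by subst p; rewrite mul0r ltxx.
Qed.

Lemma seg_between (R : realType) (al be t : R) : 0 <= t <= 1 ->
  (al <= al + t * (be - al) <= be) \/ (be <= al + t * (be - al) <= al).
Proof.
move=> /andP[t0 t1]; case: (lerP al be) => h.
  have h1 : 0 <= t * (be - al) by rewrite mulr_ge0 // subr_ge0.
  have h2 : t * (be - al) <= be - al by rewrite ler_piMl // subr_ge0.
  left; apply/andP; split; lra.
have h1 : t * (be - al) <= 0 by rewrite mulr_ge0_le0 // subr_le0 ltW.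
have h2 : be - al <= t * (be - al).
  by rewrite -[X in X <= _]mul1r ler_wnM2r // subr_le0 ltW.
right; apply/andP; split; lra.
Qed.

Lemma seg_same (R : realType) (al be t : R) : al != 0 -> be != 0 ->
  (0 < al) = (0 < be) -> 0 <= t <= 1 ->
  al + t * (be - al) != 0 /\ (0 < al + t * (be - al)) = (0 < al).
Proof.
move=> a0 b0 hs ht; have := @seg_between R al be t ht.
case: (ltrgtP al 0) a0 hs => // ha _ hs.
  have hb : be < 0 by rewrite lt_neqAle b0 leNgt -hs.
  by case=> /andP[h1 h2]; split; [apply/eqP| |apply/eqP|]; try lra;
    apply/negbTE; rewrite -leNgt; lra.
have hb : 0 < be by rewrite -hs.
by case=> /andP[h1 h2]; split; [apply/eqP| |apply/eqP|]; try lra;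
   apply/idP; lra.
Qed.

Section Arr.
Variables (R : realType) (d n : nat) (a : 'I_n -> 'rV[R]_d).
Local Notation V := 'rV[R]_d.
Local Notation dot := (@dotv R d).

Definition sg (x : V) (i : 'I_n) : bool := 0 < dot (a i) x.
Definition inc (x : V) : Prop := forall i, dot (a i) x != 0.
Definition cell (x : V) : set V := [set y | inc y /\ forall i, sg y i = sg x i].

Lemma complementE y : complement a y <-> inc y.
Proof.
rewrite /complement /=; split.
  by move=> H i; apply/eqP => h; apply: H; exists i.
by move=> H [i _ hi]; move: (H i); rewrite /hyp /= in hi; rewrite hi eqxx.
Qed.

Lemma comp_cell x : inc x -> connected_component (complement a) x = cell x.
Proof.
move=> xi; apply/seteqP; split.
- move=> y cy.
  have Cc := @component_connected _ (complement a) x.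
  have sub := @connected_component_sub _ (complement a) x.
  have yinc : inc y by apply/complementE/sub.
  split=> // i.
  pose al := dot (a i) x.
  pose f := fun z : V => al * dot (a i) z.
  have fc : continuous f by exact: scal_dot_cont.
  have al0 : al != 0 by exact: xi.
  have : connected_component (complement a) x `&` [set z | 0 < f z] =
         connected_component (complement a) x.
    apply: Cc.
    - exists x; split; first by apply: connected_component_refl; apply/complementE.
      by rewrite /f /= lt_def mulf_neq0 //= -expr2 sqr_ge0.
    - exists (f @^-1` [set r | 0 < r]) => //.
      apply: open_comp; [by move=> z _; exact: fc | exact: open_gt].
    - exists (~` (f @^-1` [set r | r < 0])).
        apply: open_closedC; apply: open_comp; [by move=> z _; exact: fc | exact: open_lt].
      apply/seteqP; split=> z [cz hz]; split => //=.
        move=> hz'; have hz2 : 0 < f z := hz; have hz3 : f z < 0 := hz'; lra.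
      have zi : inc z by apply/complementE/sub.
      have fz : f z != 0 by rewrite /f mulf_neq0 //; exact: zi.
      move: hz; rewrite /preimage /= => /negP; rewrite -leNgt le_eqVlt eq_sym (negbTE fz) //.
  move=> eB; have : (connected_component (complement a) x `&` [set z | 0 < f z]) y by rewrite eB.
  by case=> _ hy; have hy2 : 0 < al * dot (a i) y := hy; rewrite /sg (@pos_mul_same R _ _ hy2).
- move=> y [yi hy].
  pose g := fun t : R => x + t *: (y - x).
  have Hsub : g @` `[0, 1] `<=` connected_component (complement a) x.
    apply: connected_component_max.
    - exists 0; last by rewrite /g scale0r addr0.
      by rewrite /= in_itv /= lexx ler01.
    - move=> z [t]; rewrite /= in_itv /= => ht <-; apply/complementE => i.
      rewrite /g dotvD dotvZ dotvB.
      have := @seg_same R (dot (a i) x) (dot (a i) y) t (xi i) (yi i).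
      by rewrite -/(sg x i) -/(sg y i) hy => /(_ erefl ht) [].
    - apply: connected_continuous_connected; first exact: segment_connected.
      exact/continuous_subspaceT/seg_cont.
  apply: Hsub; exists 1; first by rewrite /= in_itv /= lexx ler01.
  by rewrite /g scale1r addrC subrK.
Qed.

Lemma chamberE c : chamber a c <-> exists2 x, inc x & c = cell x.
Proof.
split.
  by move=> [x /complementE xi ->]; exists x => //; exact: comp_cell.
by move=> [x xi ->]; exists x; [apply/complementE | rewrite comp_cell].
Qed.

Lemma sg_opp y i : inc y -> sg (- y) i = ~~ sg y i.
Proof.
move=> yi; rewrite /sg dotvN oppr_gt0.
have := yi i; case: (ltrgtP (dot (a i) y) 0) => //.
Qed.

Lemma inc_opp y : inc y -> inc (- y).
Proof. by move=> yi i; rewrite dotvN oppr_eq0. Qed.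

Lemma cell_in x : inc x -> cell x x.
Proof. by move=> xi; split. Qed.

Lemma cell_eq x x' : (forall i, sg x' i = sg x i) -> cell x' = cell x.
Proof. by move=> H; apply/seteqP; split=> y [yi hy]; split=> // i; rewrite hy H. Qed.

Lemma cell_mem x y : cell x y -> cell y = cell x.
Proof. by move=> [yi hy]; apply: cell_eq. Qed.

Lemma neg_mul_diff (p q : R) : p != 0 -> q != 0 ->
  (p * q < 0) = ((0 < p) != (0 < q)).
Proof.
move=> p0 q0; case: (ltrgtP p 0) p0 => // hp _.
  by rewrite nmulr_rlt0 //; case: (ltrgtP q 0) q0.
by rewrite pmulr_rlt0 //; case: (ltrgtP q 0) q0.
Qed.

Lemma sep_cell x y i : inc x -> inc y ->
  separates a i (cell x) (cell y) <-> sg x i != sg y i.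
Proof.
move=> xi yi; split.
  by move=> /(_ x y (cell_in x xi) (cell_in y yi)); rewrite neg_mul_diff.
move=> h x' y' [x'i hx] [y'i hy]; rewrite neg_mul_diff //.
by move: (hx i) (hy i); rewrite /sg => -> ->.
Qed.

Definition sepv x y : {set 'I_n} := [set i | sg x i != sg y i]%SET.

Lemma L1sep_cell x y : inc x -> inc y -> L1sep a (cell x) (cell y) = sepv x y.
Proof.
move=> xi yi; apply/setP => i; rewrite !inE.
by apply/idP/idP => [/asboolP/(sep_cell x y i xi yi)|/(sep_cell x y i xi yi)/asboolP].
Qed.

Lemma negc_cell x : inc x -> negc (cell x) = cell (- x).
Proof.
move=> xi; apply/seteqP; split => y [yi hy].
  have yi' : inc y by move=> i; have := yi i; rewrite dotvN oppr_eq0.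
  by split => // i; rewrite sg_opp // -(hy i) sg_opp // negbK.
split; first exact: inc_opp.
by move=> i; rewrite sg_opp // hy sg_opp // negbK.
Qed.

Lemma cross_cons c c1 s :
  crossings a c (c1 :: s) = enum (L1sep a c c1) ++ crossings a c1 s.
Proof. by []. Qed.

Lemma size_cross c s c' : gallery a c s c' -> size (crossings a c s) = size s.
Proof.
elim: s c => [|c1 s IH] c /=; first by [].
move=> [[_ _ h1] g]; rewrite cross_cons size_cat (IH _ g) -cardE h1.
by [].
Qed.

Lemma gal_sep s : forall x y, inc x -> inc y -> gallery a (cell x) s (cell y) ->
  sepv x y \subset [set i | i \in crossings a (cell x) s]%SET.
Proof.
elim: s => [|c1 s IH] x y xi yi /=.
  move=> e; have : cell y x by rewrite -e; exact: cell_in.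
  move=> [_ hx]; apply/fintype.subsetP => i; by rewrite inE hx eqxx.
move=> [[_ /chamberE [z zi ez] _] g].
subst c1; apply/fintype.subsetP => i; rewrite !inE cross_cons mem_cat mem_enum => hi.
case: (boolP (sg x i != sg z i)) => hz.
  by rewrite L1sep_cell // inE hz.
have := fintype.subsetP (IH z y zi yi g) i; rewrite !inE => -> //; first by rewrite orbT.
by move: hz hi; rewrite negbK => /eqP ->.
Qed.

Lemma gal_lower s x y : inc x -> inc y -> gallery a (cell x) s (cell y) ->
  (#|sepv x y| <= size s)%N.
Proof.
move=> xi yi g; rewrite -(size_cross _ _ _ g).
apply: leq_trans (subset_leq_card (gal_sep s x y xi yi g)) _.
by rewrite cardsE card_size.
Qed.

Hypothesis Hdist : forall i j, i != j -> hyp a i <> hyp a j.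

Definition ell (y : V) i j : V := dot (a j) y *: a i - dot (a i) y *: a j.

Lemma dot0v z : dot 0 z = 0.
Proof. by rewrite dotvC dotv0. Qed.

Lemma dot_ell y i j z :
  dot (ell y i j) z = dot (a j) y * dot (a i) z - dot (a i) y * dot (a j) z.
Proof. by rewrite /ell dotvC dotvB !dotvZ !(dotvC _ _ z). Qed.

Lemma ell_neq0 y i j : inc y -> i != j -> ell y i j != 0.
Proof.
move=> yi ij; apply/negP => /eqP E; apply: (Hdist i j ij).
apply/seteqP; split => z; rewrite /hyp /= => h; have := dot_ell y i j z;
  rewrite E dot0v h.
  rewrite mulr0 sub0r => /eqP; rewrite eq_sym oppr_eq0 mulf_eq0 (negbTE (yi i)) /=.
  by move/eqP.
rewrite mulr0 subr0 => /eqP; rewrite eq_sym mulf_eq0 (negbTE (yi j)) /=.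
by move/eqP.
Qed.

Lemma generic x y : inc x -> inc y -> exists x',
  [/\ inc x', (forall i, sg x' i = sg x i) &
      forall i j, i != j -> dot (ell y i j) x' != 0].
Proof.
move=> xi yi.
pose P := [seq ell y p.1 p.2 | p <- enum [set p : 'I_n * 'I_n | p.1 != p.2]%SET].
have Pnz : forall l, l \in P -> l != 0.
  by move=> l /mapP [p]; rewrite mem_enum inE => hp ->; exact: ell_neq0.
have [w Hw] := @exists_w _ _ _ Pnz.
pose L := [seq a i | i <- enum 'I_n] ++ P.
have HL : forall l, l \in L -> dot l x != 0 \/ dot l w != 0.
  move=> l; rewrite mem_cat => /orP[/mapP[i _ ->]|lP]; [left; exact: xi | right; exact: Hw].
have [t t0 Ht] := @perturb _ _ L x w HL.
have aL i : a i \in L by rewrite mem_cat map_f ?mem_enum.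
exists (x + t *: w); split.
- by move=> i; have [] := Ht (a i) (aL i).
- by move=> i; have [_ h] := Ht (a i) (aL i); rewrite /sg h //; exact: xi.
- move=> i j ij; have [] // := Ht (ell y i j).
  rewrite mem_cat; apply/orP; right; apply/mapP; exists (i, j) => //.
  by rewrite mem_enum inE.
Qed.

Lemma gal_exists k : forall x y, inc x -> inc y -> #|sepv x y| = k ->
  exists2 s, gallery a (cell x) s (cell y) & size s = k.
Proof.
elim: k => [|k IH] x0 y x0i yi hk.
  exists [::] => //=; apply/esym/cell_eq => i.
  have : i \notin sepv x0 y by rewrite (cards0_eq hk) finset.in_set0.
  by rewrite inE negbK => /eqP ->.
have [x [xi hx hell]] := generic x0 y x0i yi.
have -> : cell x0 = cell x by apply/esym/cell_eq.
have {}hk : #|sepv x y| = k.+1.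
  have -> : sepv x y = sepv x0 y by apply/setP => i; rewrite !inE hx.
  exact: hk.
pose S := sepv x y.
pose al i := dot (a i) x; pose be i := dot (a i) y.
pose tt i := al i / (al i - be i).
have sepP i : i \in S -> al i * be i < 0.
  by rewrite inE => h; rewrite /al /be neg_mul_diff ?xi ?yi.
have nosep i : i \notin S -> (0 < al i) = (0 < be i).
  by rewrite inE negbK => /eqP.
have [j0 j0S] : exists j, j \in S by apply/set0Pn; rewrite -card_gt0 hk.
have j0S' : j0 \in enum S by rewrite mem_enum.
have [i0 i0S hmin] := @exists_min R _ tt (enum S) j0 j0S'.
rewrite mem_enum in i0S.
have den i : i \in S -> al i - be i != 0.
  move=> iS; apply/negP => /eqP h; have := sepP i iS.
  have e : be i = al i by lra.
  by rewrite e -expr2 ltNge sqr_ge0.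
have hlt j : j \in S -> j != i0 -> tt i0 < tt j.
  move=> jS ji; rewrite lt_neqAle hmin ?mem_enum // andbT.
  apply/negP => /eqP e; move: e; rewrite /tt => /eqP.
  rewrite eqr_div ?den // => /eqP e.
  have := hell j i0 ji; rewrite dot_ell -/(al j) -/(al i0) -/(be j) -/(be i0).
  have -> : be i0 * al j - be j * al i0 = 0.
    by move: e; rewrite !mulrBr => e; lra.
  by rewrite eqxx.
have /andP[tt0 tt1] : 0 < tt i0 < 1 := @tt_range R _ _ (sepP i0 i0S).
have [e e0 He] := @small_pos R ([seq tt j - tt i0 | j <- enum (S :\ i0)] ++ [:: 1 - tt i0]).
pose tau := tt i0 + e / 2.
have tau1 : tau <= 1.
  have := He (1 - tt i0); rewrite mem_cat mem_seq1 eqxx orbT => /(_ isT).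
  rewrite subr_gt0 => /(_ tt1) h; rewrite /tau; lra.
have tau0 : tt i0 < tau by rewrite /tau; lra.
have tauj j : j \in S -> j != i0 -> tau < tt j.
  move=> jS ji; have jin : j \in enum (S :\ i0) by rewrite mem_enum in_setD1 ji jS.
  have := He (tt j - tt i0).
  rewrite mem_cat (map_f (fun j => tt j - tt i0) jin) => /(_ isT).
  rewrite subr_gt0 => /(_ (hlt j jS ji)) h; rewrite /tau; lra.
pose z := x + tau *: (y - x).
have dz j : dot (a j) z = al j + tau * (be j - al j) by rewrite dotvD dotvZ dotvB.
have zsg j : dot (a j) z != 0 /\ sg z j = (if j == i0 then sg y j else sg x j).
  rewrite /sg dz; case: (eqVneq j i0) => [->|ji].
    exact: (proj2 (@seg_cross R _ _ tau (sepP i0 i0S)) tau0 tau1).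
  case: (boolP (j \in S)) => jS.
    by apply: (proj1 (@seg_cross R _ _ tau (sepP j jS))); [rewrite /tau; lra | exact: tauj].
  apply: (@seg_same R); [exact: xi | exact: yi | exact: nosep | ].
  by apply/andP; split; lra.
have zi : inc z by move=> j; have [] := zsg j.
have e1 : sepv x z = [set i0]%SET.
  apply/setP => j; rewrite !inE; have [_ ->] := zsg j.
  case: (eqVneq j i0) => [->|ji]; last by rewrite eqxx.
  by move: i0S; rewrite inE eq_sym.
have e2 : sepv z y = (S :\ i0)%SET.
  apply/setP => j; rewrite !inE; have [_ ->] := zsg j.
  by case: (eqVneq j i0) => [->|ji]; rewrite ?eqxx.
have cz : #|sepv z y| = k.
  by move: hk; rewrite e2 (cardsD1 i0 S) i0S add1n => -[].
have [s gs ss] := IH z y zi yi cz.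
exists (cell z :: s); last by rewrite /= ss.
split => //; split; [apply/chamberE; exists x | apply/chamberE; exists z | ] => //.
by rewrite L1sep_cell // e1 cards1.
Qed.

Lemma L1sep_sym c c' : L1sep a c c' = L1sep a c' c.
Proof.
apply/setP => i; rewrite !inE.
by apply/idP/idP => /asboolP H; apply/asboolP => x y hx hy; rewrite mulrC; apply: H.
Qed.

Lemma G1adj_sym c c' : G1adj a c c' -> G1adj a c' c.
Proof. by case=> h1 h2 h3; split => //; rewrite L1sep_sym. Qed.

Lemma gallery_rcons s : forall c c' c'', gallery a c s c' -> G1adj a c' c'' ->
  gallery a c (rcons s c'') c''.
Proof.
elim: s => [|c1 s IH] c c' c'' /=; first by move=> -> h.
by move=> [h g] h'; split => //; exact: IH g h'.
Qed.

Lemma cross_rcons s : forall c c' c'', gallery a c s c' ->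
  crossings a c (rcons s c'') = crossings a c s ++ enum (L1sep a c' c'').
Proof.
elim: s => [|c1 s IH] c c' c'' /=; first by move=> ->; rewrite cross_cons /crossings /= cats0.
by move=> [h g]; rewrite !cross_cons (IH _ _ _ g) catA.
Qed.

Lemma enum1_rev (A : {set 'I_n}) : #|A| = 1%N -> rev (enum A) = enum A.
Proof. by rewrite cardE; case: (enum A) => [|x [|y s]]. Qed.

Lemma gallery_rev s : forall c c', gallery a c s c' ->
  gallery a c' (rev (belast c s)) c /\
  crossings a c' (rev (belast c s)) = rev (crossings a c s).
Proof.
elim: s => [|c1 s IH] c c' /=; first by move=> ->.
move=> [h g]; have [g' e'] := IH _ _ g; rewrite rev_cons; split.
  exact: (gallery_rcons _ _ _ _ g' (G1adj_sym _ _ h)).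
rewrite (cross_rcons _ _ _ _ g') e' cross_cons rev_cat L1sep_sym enum1_rev //.
by case: h; rewrite L1sep_sym.
Qed.

Lemma negcK (c : set V) : negc (negc c) = c.
Proof. by apply/seteqP; split => x; rewrite /negc /= opprK. Qed.

Lemma L1sep_neg c c' : L1sep a (negc c) (negc c') = L1sep a c c'.
Proof.
apply/setP => i; rewrite !inE.
apply/idP/idP => /asboolP H; apply/asboolP => x y hx hy.
  by have := H (- x) (- y); rewrite /negc /= !opprK !dotvN mulrNN; apply.
by have := H (- x) (- y) hx hy; rewrite !dotvN mulrNN.
Qed.

Lemma chamber_neg c : chamber a c -> chamber a (negc c).
Proof.
move=> /chamberE [x xi ->]; apply/chamberE; exists (- x); first exact: inc_opp.
exact: negc_cell.
Qed.

Lemma G1adj_neg c c' : G1adj a c c' -> G1adj a (negc c) (negc c').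
Proof. by case=> h1 h2 h3; split; rewrite ?L1sep_neg //; apply: chamber_neg. Qed.

Lemma gallery_neg s : forall c c', gallery a c s c' ->
  gallery a (negc c) (map (@negc R d) s) (negc c') /\
  crossings a (negc c) (map (@negc R d) s) = crossings a c s.
Proof.
elim: s => [|c1 s IH] c c' /=; first by move=> ->.
move=> [h g]; have [g' e] := IH _ _ g; split; first by split => //; exact: G1adj_neg.
by rewrite !cross_cons L1sep_neg e.
Qed.

Lemma L2_two X : L2 a X -> exists i j, [/\ i != j, X `<=` hyp a i & X `<=` hyp a j].
Proof.
move=> [S [-> hr]].
have : (1 < #|S|)%N.
  rewrite ltnNge; apply/negP; rewrite leq_eqVlt ltnS leqn0 => /orP[/cards1P[i eS]|/eqP/cards0_eq eS].
    have e : rowsS a S = (\col_k ((k == i)%:R : R)) *m a i.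
      apply/matrixP => k j; rewrite !mxE big_ord1 !mxE eS inE.
      by case: (eqVneq k i) => [->|ki]; rewrite ?mul1r ?mul0r ?mxE.
    have := mxrankM_maxr (\col_k ((k == i)%:R : R)) (a i).
    by rewrite -e hr => h; have := rank_leq_row (a i); rewrite leqNgt h.
  have e : rowsS a S = 0.
    by apply/matrixP => k j; rewrite !mxE eS finset.in_set0 mxE.
  by move: hr; rewrite e mxrank0.
move=> /card_gt1P [i [j [iS jS ij]]]; exists i, j; split => //; exact: bigcap_inf.
Qed.

Lemma uniq_rev_neq (T : eqType) (s : seq T) i j : uniq s -> i \in s -> j \in s ->
  i != j -> s <> rev s.
Proof.
case: s => [|x [|y t]] //.
  by move=> _; rewrite !inE => /eqP -> /eqP ->; rewrite eqxx.
move=> us _ _ _ E.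
set s := x :: y :: t in us E.
have h0 : (0 < size s)%N by [].
have h1 : ((size s).-1 < size s)%N by [].
have := nth_uniq x h0 h1 us.
have -> : nth x s 0 = nth x s (size s).-1.
  by rewrite {1}E nth_rev // subn1.
by rewrite eqxx.
Qed.

Lemma L2diff_tri c0 r r1 r' :
  L2diff a c0 r r' `<=` L2diff a c0 r r1 `|` L2diff a c0 r1 r'.
Proof.
move=> X [hX hne].
set F := fun r => [seq i <- crossings a c0 r | `[< X `<=` hyp a i >]].
case: (eqVneq (F r) (F r1)) => e.
  by right; split => //; rewrite /F -/(F r1) -e.
by left; split => //; apply/eqP.
Qed.

Lemma path_bound c0 p : forall r r', G2path a c0 r p r' ->
  exists f : nat -> set V, L2diff a c0 r r' `<=` f @` `I_(size p).
Proof.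
elim: p => [|r1 p IH] r r' /=.
  by move=> ->; exists (fun=> set0) => X [_ h]; exfalso; exact: h.
move=> [[_ _ [X1 e1]] g]; have [f hf] := IH _ _ g.
exists (fun k => if k is k'.+1 then f k' else X1).
move=> X /(@L2diff_tri c0 r r1 r') [h|h].
  by exists 0%N => //=; move: h; rewrite e1 => ->.
by have [k hk <-] := hf X h; exists k.+1.
Qed.

Lemma card_sepv x y : (#|sepv x y| <= n)%N.
Proof. by apply: leq_trans (max_card _) _; rewrite card_ord. Qed.

Lemma sepv_opp x : inc x -> sepv x (- x) = [set: 'I_n]%SET.
Proof. by move=> xi; apply/setP => i; rewrite !inE sg_opp // ; case: (sg x i). Qed.

Lemma main_thm : (forall i, a i != 0) ->
  ((forall c c', chamber a c -> chamber a c' ->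
      exists2 s, gallery a c s c' & (size s <= n)%N) /\
   (exists c c', [/\ chamber a c, chamber a c' &
      forall s, gallery a c s c' -> (n <= size s)%N])) /\
  (forall c0, chamber a c0 -> forall m : nat, (L2 a #= `I_m)%card ->
     exists r r', [/\ min_gallery a c0 r, min_gallery a c0 r' &
       forall p, G2path a c0 r p r' -> (m <= size p)%N]).
Proof.
move=> Hnz; split; [split|].
- move=> c c' /chamberE [x xi ->] /chamberE [y yi ->].
  have [s gs ss] := gal_exists _ x y xi yi erefl.
  by exists s; rewrite // ss card_sepv.
- have Pnz : forall l, l \in [seq a i | i <- enum 'I_n] -> l != 0.
    by move=> l /mapP [i _ ->].
  have [x Hx] := @exists_w _ _ _ Pnz.
  have xi : inc x by move=> i; apply: Hx; rewrite map_f ?mem_enum.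
  exists (cell x), (cell (- x)); split; try (apply/chamberE; eexists; [|reflexivity]).
  + exact: xi.
  + exact: inc_opp.
  + move=> s g; have := gal_lower s x (- x) xi (inc_opp _ xi) g.
    by rewrite sepv_opp // cardsT card_ord.
- move=> c0 /chamberE [x xi ->] m Hm.
  have xi' := inc_opp _ xi.
  have full := sepv_opp _ xi.
  have [r gr sr] := gal_exists _ x (- x) xi xi' erefl.
  rewrite full cardsT card_ord in sr.
  have lowb : forall s, gallery a (cell x) s (negc (cell x)) -> (n <= size s)%N.
    move=> s; rewrite negc_cell // => g; have := gal_lower s x (- x) xi xi' g.
    by rewrite full cardsT card_ord.
  set cr := crossings a (cell x) r.
  have crall : forall i, i \in cr.
    move=> i; have := fintype.subsetP (gal_sep r x (- x) xi xi' gr) i.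
    by rewrite full !inE; apply.
  have cru : uniq cr.
    have szc : size cr = n by rewrite /cr (size_cross _ _ _ gr) sr.
    apply/card_uniqP; rewrite szc.
    apply/eqP; rewrite eqn_leq; apply/andP; split.
      by apply: leq_trans (card_size cr) _; rewrite szc.
    have h : (#|'I_n| <= #|cr|)%N.
      by apply: subset_leq_card; apply/fintype.subsetP => i _; exact: crall.
    by rewrite card_ord in h.
  have [g1 e1] := gallery_rev _ _ _ gr.
  have [g2 e2] := gallery_neg _ _ _ g1.
  rewrite negc_cell // opprK in g2 e2.
  set r' := map (@negc R d) (rev (belast (cell x) r)) in g2 e2.
  have sr' : size r' = n by rewrite /r' size_map size_rev size_belast.
  exists r, r'; split.
  + split; first by rewrite negc_cell.
    by move=> s /lowb; rewrite sr.
  + split; first exact: g2.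
    by move=> s /lowb; rewrite sr'.
  + move=> p hp.
    have sub : L2 a `<=` L2diff a (cell x) r r'.
      move=> X hX; split => //.
      have [i [j [ij hi hj]]] := L2_two X hX.
      rewrite e2 e1 -/cr filter_rev.
      apply: (@uniq_rev_neq _ _ i j); first exact: filter_uniq.
      * by rewrite mem_filter crall andbT; apply: asboolT.
      * by rewrite mem_filter crall andbT; apply: asboolT.
      * exact: ij.
    have [f hf] := path_bound _ _ _ _ hp.
    have h1 : (`I_m #<= L2 a)%card by rewrite card_eq_sym in Hm; move: Hm; rewrite card_eq_le => /andP[].
    have h2 : (L2 a #<= f @` `I_(size p))%card.
      by apply: subset_card_le => X /sub /hf.
    have h3 := card_le_trans h1 (card_le_trans h2 (card_image_le f _)).
    by rewrite card_le_II in h3.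
Qed.

End Arr.

Theorem corollary3p13 (R : realType) (d n : nat) (a : 'I_n -> 'rV[R]_d) :
  central_essential_arrangement a ->
  (* diam G_1 = |L_1| = n *)
  ((forall c c', chamber a c -> chamber a c' ->
      exists2 s, gallery a c s c' & (size s <= n)%N) /\
   (exists c c', [/\ chamber a c, chamber a c' &
      forall s, gallery a c s c' -> (n <= size s)%N])) /\
  (* diam G_2 >= |L_2|, for every base chamber c0 *)
  (forall c0, chamber a c0 -> forall m : nat, (L2 a #= `I_m)%card ->
     exists r r', [/\ min_gallery a c0 r, min_gallery a c0 r' &
       forall p, G2path a c0 r p r' -> (m <= size p)%N]).
Proof.
move=> [Hnz Hdist _]; exact: (main_thm R d n a Hdist Hnz).
Qed.
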